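(* Let $p\ge 1$, let $\alpha\in[0,1)$ and let $g\in\mathbb{R}^p$ with $g\neq 0$. Let $m$ be an index with $|g_m|=\max_d|g_d|$, and let $I_{12}$ be the $p\times p$ diagonal matrix with $(I_{12})_{dd}=1$ if $|g_d|\ge \alpha|g_m|$ and $(I_{12})_{dd}=0$ otherwise (all off-diagonal entries zero). Define $$\Delta x_{12}:=-I_{12}g\left(\frac{\alpha}{\|I_{12}g\|_1}+\frac{1-\alpha}{\|I_{12}g\|_2}\right),\qquad q_1:=\left(\frac{\|I_{12}g\|_1}{\|I_{12}g\|_2}\right)^2,$$ $$c_\alpha(q_1):=\frac{\sqrt{q_1(\alpha^2q_1+4(1-\alpha))}-\alpha q_1}{2(1-\alpha)(\sqrt{q_1}(1-\alpha)+\alpha)}.$$ If $\Delta x_{12,c}:=c_\alpha(q_1)\cdot\Delta x_{12}$, then $h_\alpha(\Delta x_{12,c})=1$, where $h_\alpha(v):=\alpha\|v\|_1+(1-\alpha)\|v\|_2^2$ for $v\in\mathbb{R}^p$.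
   Context: $g$ plays the role of a gradient vector; $I_{12}$ selects the coordinates whose absolute gradient is at least $\alpha$ times the maximal absolute gradient; $\Delta x_{12}$ is the (non-scaled) elastic gradient descent update direction. *)

(* Defs.v *)
(* R : rcfType (real closed field, so that Num.sqrt exists). *)
From mathcomp Require Import all_boot all_order all_algebra.
Set Implicit Arguments. Unset Strict Implicit. Unset Printing Implicit Defensive.
Import Order.TTheory GRing.Theory Num.Theory.
Local Open Scope ring_scope.

Definition norm1 {R : rcfType} {p : nat} (v : 'cV[R]_p) : R :=
  \sum_(i < p) `|v i 0|.

Definition norm2sq {R : rcfType} {p : nat} (v : 'cV[R]_p) : R :=
  \sum_(i < p) (v i 0) ^+ 2.

Definition norm2 {R : rcfType} {p : nat} (v : 'cV[R]_p) : R :=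
  Num.sqrt (norm2sq v).

Definition I12 {R : rcfType} {p : nat} (alpha : R) (g : 'cV[R]_p) (m : 'I_p)
  : 'M[R]_p :=
  \matrix_(i < p, j < p)
    (if i == j then (if alpha * `|g m 0| <= `|g i 0| then 1 else 0) else 0).

Definition dx12 {R : rcfType} {p : nat} (alpha : R) (g : 'cV[R]_p) (m : 'I_p)
  : 'cV[R]_p :=
  let Ig := I12 alpha g m *m g in
  - (alpha / norm1 Ig + (1 - alpha) / norm2 Ig) *: Ig.

Definition q1 {R : rcfType} {p : nat} (alpha : R) (g : 'cV[R]_p) (m : 'I_p) : R :=
  let Ig := I12 alpha g m *m g in (norm1 Ig / norm2 Ig) ^+ 2.

Definition c_alpha {R : rcfType} (alpha q : R) : R :=
  (Num.sqrt (q * (alpha ^+ 2 * q + 4 * (1 - alpha))) - alpha * q)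
  / (2 * (1 - alpha) * (Num.sqrt q * (1 - alpha) + alpha)).

Definition h_alpha {R : rcfType} {p : nat} (alpha : R) (v : 'cV[R]_p) : R :=
  alpha * norm1 v + (1 - alpha) * norm2sq v.

(* Main.v *)
Require Import Defs.
From mathcomp Require Import all_boot all_order all_algebra.
From mathcomp Require Import ring lra.
Import Order.TTheory GRing.Theory Num.Theory.
Local Open Scope ring_scope.

Lemma norm1Z (R : rcfType) (p : nat) (k : R) (v : 'cV[R]_p) :
  norm1 (k *: v) = `|k| * norm1 v.
Proof.
rewrite /norm1 mulr_sumr; apply: eq_bigr => i _; by rewrite mxE normrM.
Qed.

Lemma norm2sqZ (R : rcfType) (p : nat) (k : R) (v : 'cV[R]_p) :
  norm2sq (k *: v) = k ^+ 2 * norm2sq v.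
Proof.
rewrite /norm2sq mulr_sumr; apply: eq_bigr => i _; by rewrite mxE exprMn.
Qed.

Lemma I12E (R : rcfType) (p : nat) (alpha : R) (g : 'cV[R]_p) (m : 'I_p) i :
  (I12 alpha g m *m g) i 0 =
  (if alpha * `|g m 0| <= `|g i 0| then 1 else 0) * g i 0.
Proof.
rewrite mxE (bigD1 i) //= big1 ?addr0; first by rewrite mxE eqxx.
by move=> j /negbTE ji; rewrite mxE eq_sym ji mul0r.
Qed.

Lemma alg (R : rcfType) (a n1 n2 : R) (ha0 : 0 <= a) (ha1 : a < 1)
  (h1 : 0 < n1) (h2 : 0 < n2) :
  let s := n1 / n2 in
  let k := a / n1 + (1 - a) / n2 in
  let c := (Num.sqrt (s ^+ 2 * (a ^+ 2 * s ^+ 2 + 4 * (1 - a))) - a * s ^+ 2)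
    / (2 * (1 - a) * (Num.sqrt (s ^+ 2) * (1 - a) + a)) in
  a * (`|c * k| * n1) + (1 - a) * ((c * k) ^+ 2 * n2 ^+ 2) = 1.
Proof.
move=> s k c.
have hs : 0 < s by rewrite divr_gt0.
have hb : 0 < 1 - a by rewrite subr_gt0.
set E := Num.sqrt (a ^+ 2 * s ^+ 2 + 4 * (1 - a)).
have hE0 : 0 <= E by rewrite sqrtr_ge0.
have hE2 : E ^+ 2 = a ^+ 2 * s ^+ 2 + 4 * (1 - a).
  by rewrite sqr_sqrtr //; apply: addr_ge0; [apply: mulr_ge0; apply: sqr_ge0 | lra].
have hD : Num.sqrt (s ^+ 2 * (a ^+ 2 * s ^+ 2 + 4 * (1 - a))) = s * E.
  by rewrite sqrtrM ?sqr_ge0 // sqrtr_sqr ger0_norm // ltW.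
have hS : Num.sqrt (s ^+ 2) = s by rewrite sqrtr_sqr ger0_norm // ltW.
have hEas : a * s <= E.
  have h0 : 0 <= a * s by apply: mulr_ge0 => //; apply: ltW.
  rewrite -ler_sqr ?nnegrE // hE2; nra.
have hden : 0 < s * (1 - a) + a by apply: ltr_wpDr => //; apply: mulr_gt0.
have hk : k * n1 = s * (1 - a) + a.
  rewrite /k /s; field; apply/andP; split; apply: lt0r_neq0 => //.
have hT : c * k * n1 = s * (E - a * s) / (2 * (1 - a)).
  rewrite -mulrA hk /c hD hS; field.
  apply/andP; split; apply: lt0r_neq0 => //; lra.
have hT0 : 0 <= c * k.
  rewrite -(pmulr_lge0 _ h1) hT; apply: divr_ge0; [apply: mulr_ge0; lra | lra].
rewrite ger0_norm // hT.
have -> : (c * k) ^+ 2 * n2 ^+ 2 = (c * k * n1) ^+ 2 / s ^+ 2.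
  rewrite /s; field; apply/andP; split; apply: lt0r_neq0 => //.
rewrite hT.
have hb0 : 1 - a != 0 by apply: lt0r_neq0.
have hs0 : s != 0 by apply: lt0r_neq0.
transitivity ((E ^+ 2 - a ^+ 2 * s ^+ 2) / (4 * (1 - a))).
  field; rewrite hb0 hs0 //.
rewrite hE2; field; rewrite hb0 //.
Qed.

Theorem theorem1 (R : rcfType) (p : nat) (hp : (1 <= p)%N)
  (alpha : R) (ha0 : 0 <= alpha) (ha1 : alpha < 1)
  (g : 'cV[R]_p) (hg : g != 0)
  (m : 'I_p) (hm : forall d : 'I_p, `|g d 0| <= `|g m 0|) :
  h_alpha alpha (c_alpha alpha (q1 alpha g m) *: dx12 alpha g m) = 1.
Proof.
have hgm : g m 0 != 0.
  apply/negP => /eqP h0; move/negP: hg; apply; apply/eqP/matrixP => i j.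
  rewrite (ord1 j) mxE; apply/eqP; rewrite -normr_le0; apply: le_trans (hm i) _; by rewrite h0 normr0.
set v := I12 alpha g m *m g.
have hvm : v m 0 = g m 0.
  rewrite /v I12E ifT ?mul1r //.
  by rewrite ler_piMl ?normr_ge0 // ltW.
have hn1 : 0 < norm1 v.
  rewrite /norm1 (bigD1 m) //= hvm; apply: ltr_wpDr; first by apply: sumr_ge0 => *.
  by rewrite normr_gt0.
have hN : 0 < norm2sq v.
  rewrite /norm2sq (bigD1 m) //= hvm; apply: ltr_wpDr; first by apply: sumr_ge0 => *; apply: sqr_ge0.
  by rewrite lt_def sqrf_eq0 hgm sqr_ge0.
have hn2 : 0 < norm2 v by rewrite /norm2 sqrtr_gt0.
have hN2 : norm2sq v = norm2 v ^+ 2 by rewrite /norm2 sqr_sqrtr // ltW.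
rewrite /h_alpha /c_alpha /q1 /dx12 -/v scalerA norm1Z norm2sqZ hN2.
rewrite mulrN normrN sqrrN.
move: (@alg R alpha (norm1 v) (norm2 v) ha0 ha1 hn1 hn2) => /= H.
rewrite -[RHS]H; congr (_ + _).
Qed.
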